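(* For an almost contact metric manifold $\mathcal M$ with structure $(\phi,\xi,\eta,g)$ the following are equivalent: (1) $\mathcal M$ is a CR-manifold and $h=0$; (2) $\mathcal M$ is $\eta$-normal and $h=0$; (3) $\mathcal M$ is normal, i.e. $N^{(1)}=0$ identically.
   Context: Almost contact metric structure $(\phi,\xi,\eta,g)$: $\phi^2=-\mathrm{Id}+\eta\otimes\xi$, $\eta(\xi)=1$, $g(\phi X,\phi Y)=g(X,Y)-\eta(X)\eta(Y)$. Convention $2d\eta(X,Y)=X\eta(Y)-Y\eta(X)-\eta([X,Y])$. $[\phi,\phi](X,Y)=\phi^2[X,Y]+[\phi X,\phi Y]-\phi[\phi X,Y]-\phi[X,\phi Y]$, $N^{(1)}=[\phi,\phi]+2d\eta\otimes\xi$; $h=\tfrac12\mathcal L_\xi\phi$. $\eta$-normal: $N^{(1)}(X,Y)=0$ whenever $\eta(X)=\eta(Y)=0$. CR-manifold: for all $X,Y$ with $\eta(X)=\eta(Y)=0$ there is $Z$ with $\eta(Z)=0$ and $[X-i\phi X,Y-i\phi Y]=Z-i\phi Z$. *)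

(* Defs.v *)
From HB Require Import structures.
From mathcomp Require Import all_boot all_order all_algebra.
From mathcomp Require Import reals.
Set Implicit Arguments. Unset Strict Implicit. Unset Printing Implicit Defensive.
Import Order.TTheory GRing.Theory Num.Theory.
Local Open Scope ring_scope.

(* The "manifold": a set of points M, the algebra C of smooth real functions
   (an R-algebra faithfully represented by real-valued functions on M), and the
   C-module X of vector fields, with the action of vector fields on functions
   (X f) and the Lie bracket of vector fields. *)
Record manifold_data (R : realType) (M : Type) (C : comAlgType R)
    (X : lmodType C) := ManifoldData {
  ev : C -> M -> R;
  act : X -> C -> C;
  br : X -> X -> X;
  ev_inj : injective ev;
  ev_add : forall f g p, ev (f + g) p = ev f p + ev g p;
  ev_mul : forall f g p, ev (f * g) p = ev f p * ev g p;
  ev_scale : forall (r : R) f p, ev (r *: f) p = r * ev f p;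
  ev_one : forall p, ev 1 p = 1;
  act_addl : forall U V f, act (U + V) f = act U f + act V f;
  act_scalel : forall (a : C) U f, act (a *: U) f = a * act U f;
  act_addr : forall U f g, act U (f + g) = act U f + act U g;
  act_scaler : forall U (r : R) f, act U (r *: f) = r *: act U f;
  act_mulr : forall U f g, act U (f * g) = act U f * g + f * act U g;
  br_anti : forall U V, br U V = - br V U;
  br_addr : forall U V W, br U (V + W) = br U V + br U W;
  br_leibniz : forall U V (f : C), br U (f *: V) = act U f *: V + f *: br U V;
  br_jacobi : forall U V W,
    br U (br V W) + br V (br W U) + br W (br U V) = 0;
  br_act : forall U V f, act (br U V) f = act U (act V f) - act V (act U f)
}.

Record acm_structure (R : realType) (M : Type) (C : comAlgType R)
    (X : lmodType C) (Mf : manifold_data M X) := ACM {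
  phi : X -> X;
  xi : X;
  eta : X -> C;
  g : X -> X -> C;
  phi_add : forall U V, phi (U + V) = phi U + phi V;
  phi_scale : forall (a : C) U, phi (a *: U) = a *: phi U;
  eta_add : forall U V, eta (U + V) = eta U + eta V;
  eta_scale : forall (a : C) U, eta (a *: U) = a * eta U;
  g_sym : forall U V, g U V = g V U;
  g_add : forall U V W, g (U + V) W = g U W + g V W;
  g_scale : forall (a : C) U V, g (a *: U) V = a * g U V;
  g_pos : forall U p, 0 <= ev Mf (g U U) p;
  g_definite : forall U, g U U = 0 -> U = 0;
  phi2 : forall U, phi (phi U) = - U + eta U *: xi;
  eta_xi : eta xi = 1;
  g_compat : forall U V, g (phi U) (phi V) = g U V - eta U * eta V
}.

Section Tensors.
Variables (R : realType) (M : Type) (C : comAlgType R) (X : lmodType C)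
  (Mf : manifold_data M X) (S : acm_structure Mf).

Local Notation "[ U , V ]" := (br Mf U V).
Local Notation phi := (phi S).
Local Notation eta := (eta S).
Local Notation xi := (xi S).

Definition two_deta (U V : X) : C :=
  act Mf U (eta V) - act Mf V (eta U) - eta [U, V].

Definition nijenhuis (U V : X) : X :=
  phi (phi [U, V]) + [phi U, phi V] - phi [phi U, V] - phi [U, phi V].

Definition N1 (U V : X) : X := nijenhuis U V + two_deta U V *: xi.

(* h = 1/2 L_xi phi, (L_xi phi) U = [xi, phi U] - phi [xi, U] *)
Definition h (U : X) : X :=
  ((2 : R)^-1)%:A *: ([xi, phi U] - phi [xi, U]).

Definition h_zero : Prop := forall U, h U = 0.

Definition normal : Prop := forall U V, N1 U V = 0.

Definition eta_normal : Prop :=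
  forall U V, eta U = 0 -> eta V = 0 -> N1 U V = 0.

(* Complexified vector fields A + iB are represented by pairs (A, B); the
   bracket is extended complex-bilinearly:
   [A + iB, C + iD] = ([A,C] - [B,D]) + i([A,D] + [B,C]). *)
Definition cbr (P Q : X * X) : X * X :=
  ([P.1, Q.1] - [P.2, Q.2], [P.1, Q.2] + [P.2, Q.1]).

Definition hol (U : X) : X * X := (U, - phi U).

Definition CR_manifold : Prop :=
  forall U V, eta U = 0 -> eta V = 0 ->
    exists Z, eta Z = 0 /\ cbr (hol U) (hol V) = hol Z.

End Tensors.

(* Main.v *)
Require Import Defs.
From mathcomp Require Import all_boot all_order all_algebra.
From mathcomp Require Import reals ring.
From Stdlib Require Import FunctionalExtensionality.
Set Implicit Arguments. Unset Strict Implicit. Unset Printing Implicit Defensive.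
Import Order.TTheory GRing.Theory Num.Theory.
Local Open Scope ring_scope.

Section Z.
Variable V : zmodType.
Lemma zA (a a' b b' c c' d d' : V) :
  (a + a') + (b + b') - (c + c') - (d + d') = (a + b - c - d) + (a' + b' - c' - d').
Proof.
rewrite !opprD (addrACA a) (addrACA (a + b)) (addrACA (a + b - c)) //.
Qed.
Lemma zB (a b c d : V) : - a + - b - - c - - d = - (a + b - d - c).
Proof. by rewrite !opprD !opprK addrAC. Qed.
Lemma zC (a b c d e : V) :
  (- a + e + b - c - d) + - e = - (a - b) - (c + d).
Proof. by rewrite (addrAC (-a) e) (addrAC _ e (-c)) (addrAC _ e (-d)) addrK opprB opprD addrA (addrC b). Qed.
End Z.

Section Main.
Variables (R : realType) (M : Type) (C : comAlgType R) (X : lmodType C)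
  (Mf : manifold_data M X) (S : acm_structure Mf).
Local Notation br := (br Mf).
Local Notation act := (act Mf).
Local Notation phi := (phi S).
Local Notation eta := (eta S).
Local Notation xi := (xi S).

Lemma phi0 : phi 0 = 0.
Proof. by apply: (addrI (phi 0)); rewrite -phi_add !addr0. Qed.
Lemma phiN U : phi (- U) = - phi U.
Proof. by rewrite -scaleN1r phi_scale scaleN1r. Qed.
Lemma phiB U V : phi (U - V) = phi U - phi V.
Proof. by rewrite phi_add phiN. Qed.
Lemma eta0 : eta 0 = 0.
Proof. by apply: (addrI (eta 0)); rewrite -eta_add !addr0. Qed.
Lemma etaN U : eta (- U) = - eta U.
Proof. by rewrite -scaleN1r eta_scale mulN1r. Qed.
Lemma etaB U V : eta (U - V) = eta U - eta V.
Proof. by rewrite eta_add etaN. Qed.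
Lemma brr0 U : br U 0 = 0.
Proof. by apply: (addrI (br U 0)); rewrite -br_addr !addr0. Qed.
Lemma brNr U V : br U (- V) = - br U V.
Proof. by apply: (addrI (br U V)); rewrite -br_addr !subrr brr0. Qed.
Lemma brBr U V W : br U (V - W) = br U V - br U W.
Proof. by rewrite br_addr brNr. Qed.
Lemma brDl U V W : br (U + V) W = br U W + br V W.
Proof. by rewrite br_anti br_addr opprD -!br_anti. Qed.
Lemma br0l U : br 0 U = 0.
Proof. by rewrite br_anti brr0 oppr0. Qed.
Lemma brNl U V : br (- U) V = - br U V.
Proof. by rewrite br_anti brNr opprK -br_anti. Qed.
Lemma act0r U : act U 0 = 0.
Proof. by apply: (addrI (act U 0)); rewrite -act_addr !addr0. Qed.
Lemma act1 U : act U 1 = 0.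
Proof.
have := @act_mulr _ _ _ _ Mf U 1 1; rewrite mul1r mulr1 mul1r => H.
by apply: (addrI (act U 1)); rewrite addr0 -H.
Qed.
Lemma ev0 p : ev Mf 0 p = 0.
Proof. by apply: (addrI (ev Mf 0 p)); rewrite -ev_add !addr0. Qed.
Lemma sq0 (a : C) : a * a = 0 -> a = 0.
Proof.
move=> H; apply: (@ev_inj _ _ _ _ Mf); apply: functional_extensionality => p.
have : ev Mf a p * ev Mf a p = 0 by rewrite -ev_mul H ev0.
move/eqP; rewrite mulf_eq0 orbb => /eqP ->.
by rewrite ev0.
Qed.
Lemma phi3 U : eta (phi U) *: xi = eta U *: phi xi.
Proof.
have H := congr1 phi (phi2 S U).
by rewrite phi2 phi_add phiN phi_scale in H; move/addrI: H.
Qed.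
Lemma phi_xi : phi xi = 0.
Proof.
have E := phi3 xi; rewrite eta_xi scale1r in E.
set a := eta (phi xi) in E.
have H := phi2 S xi; rewrite eta_xi scale1r in H. rewrite (addNr xi) -E phi_scale -E scalerA in H.
have : eta ((a * a) *: xi) = 0 by rewrite H eta0.
rewrite eta_scale eta_xi mulr1 => /sq0 a0.
by rewrite -E a0 scale0r.
Qed.
Lemma eta_phi U : eta (phi U) = 0.
Proof.
have := congr1 eta (phi3 U); rewrite phi_xi scaler0 eta0 eta_scale eta_xi.
by rewrite mulr1.
Qed.
Lemma phi2h U : eta U = 0 -> phi (phi U) = - U.
Proof. by move=> e; rewrite phi2 e scale0r addr0. Qed.
Lemma phi3' U : phi (phi (phi U)) = - phi U.
Proof. by rewrite phi2h // eta_phi. Qed.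

Lemma nij_scale U V f : nijenhuis S U (f *: V) = f *: nijenhuis S U V.
Proof.
rewrite /nijenhuis !phi_scale !br_leibniz !phi_add !phi_scale.
by rewrite zA addrK subrr add0r !scalerBr scalerDr.
Qed.
Lemma tdeta_scale U V f : two_deta S U (f *: V) = f * two_deta S U V.
Proof.
rewrite /two_deta eta_scale act_mulr act_scalel br_leibniz eta_add !eta_scale.
ring.
Qed.
Lemma N1_scale U V f : N1 S U (f *: V) = f *: N1 S U V.
Proof. by rewrite /N1 nij_scale tdeta_scale -scalerA -scalerDr. Qed.

Lemma nij_add U V W : nijenhuis S U (V + W) = nijenhuis S U V + nijenhuis S U W.
Proof. by rewrite /nijenhuis !(phi_add, br_addr) zA. Qed.
Lemma tdeta_add U V W : two_deta S U (V + W) = two_deta S U V + two_deta S U W.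
Proof. rewrite /two_deta eta_add act_addr act_addl br_addr eta_add; ring. Qed.
Lemma N1_add U V W : N1 S U (V + W) = N1 S U V + N1 S U W.
Proof. by rewrite /N1 nij_add tdeta_add scalerDl addrACA. Qed.
Lemma nij_anti U V : nijenhuis S V U = - nijenhuis S U V.
Proof.
rewrite /nijenhuis (br_anti Mf V U) (br_anti Mf (phi V) (phi U)) (br_anti Mf (phi V) U).
by rewrite (br_anti Mf V (phi U)) !phiN zB.
Qed.
Lemma tdeta_anti U V : two_deta S V U = - two_deta S U V.
Proof. rewrite /two_deta (br_anti Mf V U) etaN; ring. Qed.
Lemma N1_anti U V : N1 S V U = - N1 S U V.
Proof. by rewrite /N1 nij_anti tdeta_anti scaleNr (opprD (nijenhuis S U V)). Qed.

Lemma h2 : ((2:R)^-1 *+ 2) = 1.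
Proof. by rewrite -mulr_natr; field. Qed.
Lemma alg2 : ((2:R)^-1)%:A *+ 2 = (1 : C).
Proof. by rewrite scalerMnl h2 scale1r. Qed.
Lemma halfZ (w : X) : ((2:R)^-1)%:A *: w = 0 -> w = 0.
Proof. by move=> H; rewrite -[w]scale1r -alg2 -scalerMnl H mul0rn. Qed.
Lemma dbl0 (w : X) : w = - w -> w = 0.
Proof.
move=> H; have E : w *+ 2 = 0 by rewrite mulr2n {2}H subrr.
by rewrite -[w]scale1r -alg2 -scalerMnl scalerMnr E scaler0.
Qed.
Lemma N1_self U : N1 S U U = 0.
Proof. by apply: dbl0; rewrite -{1}N1_anti. Qed.

Lemma N1_hor U V : eta U = 0 -> eta V = 0 ->
  N1 S U V = - (br U V - br (phi U) (phi V)) - phi (br (phi U) V + br U (phi V)).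
Proof.
move=> eU eV; rewrite /N1 /nijenhuis /two_deta eU eV !act0r phi2 !sub0r phi_add.
by rewrite oppr0 sub0r scaleNr zC.
Qed.

Lemma hor_eq U V : eta U = 0 -> eta V = 0 -> N1 S U V = 0 ->
  br U V - br (phi U) (phi V) = - phi (br (phi U) V + br U (phi V)).
Proof. by move=> eU eV; rewrite N1_hor // => /subr0_eq H; rewrite -[LHS]opprK H. Qed.

Lemma CR_etaN : CR_manifold S -> eta_normal S.
Proof.
move=> CR U V eU eV; have [Z [eZ E]] := CR U V eU eV.
move: E; rewrite /cbr /hol /= !brNl !brNr opprK => -[E1 E2].
have EP : br (phi U) V + br U (phi V) = phi Z.
  by apply: oppr_inj; rewrite -E2 opprD addrC.
by rewrite N1_hor // E1 EP phi2h // subrr.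
Qed.

Lemma etaN_CR : eta_normal S -> CR_manifold S.
Proof.
move=> EN U V eU eV.
have H := hor_eq eU eV (EN U V eU eV).
have eP : eta (br (phi U) V + br U (phi V)) = 0.
  have eU' : eta (phi U) = 0 := eta_phi U.
  have := hor_eq eU' eV (EN _ _ eU' eV).
  rewrite phi2h // brNl opprK => ->.
  by rewrite etaN eta_phi oppr0.
exists (br U V - br (phi U) (phi V)); split; first by rewrite H etaN eta_phi oppr0.
rewrite /cbr /hol /= !brNl !brNr opprK; congr (_, _).
by rewrite H phiN opprK phi2 eP scale0r addr0 opprD addrC.
Qed.

Lemma normal_h : normal S -> h_zero S.
Proof.
move=> NS U.
have key : forall V, eta (br xi V) = act xi (eta V).
  move=> V; have := congr1 eta (NS xi V).
  rewrite /N1 eta_add eta_scale eta_xi mulr1 eta0 /nijenhuis !etaB eta_add !eta_phi.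
  rewrite phi_xi br0l eta0 /two_deta eta_xi act1 => E.
  apply/esym/subr0_eq; rewrite -E; ring.
have T : two_deta S xi U = 0 by rewrite /two_deta key eta_xi act1 subr0 subrr.
have Nn : nijenhuis S xi U = 0 by have := NS xi U; rewrite /N1 T scale0r addr0.
move: Nn; rewrite /nijenhuis phi_xi !br0l phi0 addr0 subr0 => /subr0_eq E.
have := congr1 phi E; rewrite phi3' phi2 key eta_phi act0r scale0r addr0.
move=> /oppr_inj E'.
by rewrite /h E' subrr scaler0.
Qed.

Lemma decomp_eta V : eta (V - eta V *: xi) = 0.
Proof. by rewrite etaB eta_scale eta_xi mulr1 subrr. Qed.

Lemma N1_xiV : h_zero S -> forall V, eta V = 0 -> N1 S xi V = 0.
Proof.
move=> hz V eV.
have hx : forall W, br xi (phi W) = phi (br xi W).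
  by move=> W; have := hz W; rewrite /h => /halfZ /subr0_eq.
have eb : eta (br xi V) = 0.
  by rewrite -[V]opprK -(phi2h eV) brNr hx etaN eta_phi oppr0.
rewrite /N1 /nijenhuis /two_deta phi_xi !br0l phi0 hx eV eta_xi act0r act1 eb.
by rewrite addr0 subr0 subrr !subr0 scale0r addr0.
Qed.

Lemma N1_xi_all : h_zero S -> forall V, N1 S xi V = 0.
Proof.
move=> hz V; rewrite -[V](subrK (eta V *: xi)) N1_add N1_scale.
by rewrite (N1_xiV hz (decomp_eta V)) N1_self scaler0 addr0.
Qed.

Lemma etaN_h_normal : eta_normal S -> h_zero S -> normal S.
Proof.
move=> EN hz.
have hor1 : forall U V, eta U = 0 -> N1 S U V = 0.
  move=> U V eU; rewrite -[V](subrK (eta V *: xi)) N1_add N1_scale.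
  rewrite (EN U _ eU (decomp_eta V)) N1_anti (N1_xi_all hz) oppr0 scaler0.
  by rewrite addr0.
move=> U V; rewrite -[U](subrK (eta U *: xi)) N1_anti N1_add N1_scale.
rewrite N1_anti (hor1 _ _ (decomp_eta U)) N1_anti (N1_xi_all hz).
by rewrite !oppr0 scaler0 addr0 oppr0.
Qed.

End Main.

Theorem mainTheorem3 (R : realType) (M : Type) (C : comAlgType R)
    (X : lmodType C) (Mf : manifold_data M X) (S : acm_structure Mf) :
  ((CR_manifold S /\ h_zero S) <-> (eta_normal S /\ h_zero S)) /\
  ((eta_normal S /\ h_zero S) <-> normal S).
Proof.
split; split.
- by case=> CR hz; split => //; apply: CR_etaN.
- by case=> EN hz; split => //; apply: etaN_CR.
- by case=> EN hz; apply: etaN_h_normal.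
- move=> NS; split; last exact: normal_h.
  by move=> U V _ _; apply: NS.
Qed.
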